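(* Let $n,m,k$ be positive integers with $k\mid n$, let $p\in(0,1/2)$, and let $\mu_1,\dots,\mu_k\in\{0,1\}^m$ be fixed vectors satisfying the non-degeneracy assumption. Let $V=V_1\sqcup\dots\sqcup V_k$ with $|V_i|=n/k$, where every person $v\in V_i$ answers question $s\in\{1,\dots,m\}$ with $v(s)=\mu_i(s)$ with probability $1-p$ and $v(s)=1-\mu_i(s)$ with probability $p$, independently across persons and questions. Let $\mathcal P$ be the set of cuts $\{A_s^0,A_s^1\}$, $s=1,\dots,m$, with $A_s^y=\{v\in V: v(s)=y\}$. Let $a=\alpha n$ be the agreement parameter and suppose $p<a/n$. Then the probability that there is a $\mathcal P$-tangle which is not equal to any of the mindsets $\mu_1,\dots,\mu_k$ is at most $k\,m\,\exp\bigl(-2(\alpha-p)^2n/k\bigr)$.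
   Context: An orientation of $\mathcal P$ chooses one side of every cut; it is identified with $\tau\in\{0,1\}^m$ by choosing the side $A_s^{\tau(s)}$ for question $s$. An orientation $O$ is a $\mathcal P$-tangle if for all (not necessarily distinct) chosen sides $A,B,C\in O$ we have $|A\cap B\cap C|\ge a$. Non-degeneracy assumption: whenever $\tau\in\{0,1\}^m$ has the property that for all $x,y,z\in\{1,\dots,m\}$ there exists a mindset $\mu_i$ with $\tau(x)=\mu_i(x)$, $\tau(y)=\mu_i(y)$ and $\tau(z)=\mu_i(z)$, then $\tau=\mu_j$ for some $j$. The probability is over the random answers. *)

(* Defs.v *)
From HB Require Import structures.
From mathcomp Require Import all_boot all_order all_algebra.
From mathcomp Require Import reals.
From mathcomp Require Import sequences exp.
Set Implicit Arguments. Unset Strict Implicit. Unset Printing Implicit Defensive.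
Import Order.TTheory GRing.Theory Num.Theory.
Local Open Scope ring_scope.

(* An answer profile: person v : 'I_n answers question s : 'I_m with
   the bit  w (v, s). *)
Definition answers (n m : nat) := {ffun 'I_n * 'I_m -> bool}.

Definition side (n m : nat) (w : answers n m) (s : 'I_m) (y : bool) : {set 'I_n} :=
  [set v | w (v, s) == y].

(* An orientation tau (tau s chooses A_s^(tau s)) is a P-tangle with
   agreement parameter a if any three chosen sides meet in >= a persons. *)
Definition is_tangle (R : realType) (n m : nat) (a : R) (w : answers n m)
    (tau : {ffun 'I_m -> bool}) : bool :=
  [forall x : 'I_m, forall y : 'I_m, forall z : 'I_m,
     a <= (#|side w x (tau x) :&: side w y (tau y) :&: side w z (tau z)|)%:R].

Definition mindsets_nondegenerate (m k : nat) (mu : 'I_k -> {ffun 'I_m -> bool}) : Prop :=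
  forall tau : {ffun 'I_m -> bool},
    (forall x y z : 'I_m, exists i : 'I_k,
        [/\ tau x = mu i x, tau y = mu i y & tau z = mu i z]) ->
    exists j : 'I_k, tau = mu j.

(* Probability of an answer profile: person v in group c v answers question s
   with mu_(c v)(s) w.p. 1-p and with the opposite bit w.p. p, independently. *)
Definition weight (R : realType) (n m k : nat) (p : R)
    (mu : 'I_k -> {ffun 'I_m -> bool}) (c : 'I_n -> 'I_k) (w : answers n m) : R :=
  \prod_(vs : 'I_n * 'I_m)
     (if w vs == mu (c vs.1) vs.2 then 1 - p else p).

Definition bad_event (R : realType) (n m k : nat) (a : R)
    (mu : 'I_k -> {ffun 'I_m -> bool}) (w : answers n m) : bool :=
  [exists tau : {ffun 'I_m -> bool},
     is_tangle a w tau && [forall j : 'I_k, tau != mu j]].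

Definition prob_bad (R : realType) (n m k : nat) (p a : R)
    (mu : 'I_k -> {ffun 'I_m -> bool}) (c : 'I_n -> 'I_k) : R :=
  \sum_(w : answers n m | bad_event a mu w) weight p mu c w.

(* Main.v *)
Require Import Defs.
From HB Require Import structures.
From mathcomp Require Import all_boot all_order all_algebra.
From mathcomp Require Import reals.
From mathcomp Require Import sequences exp.
From mathcomp Require Import boolp classical_sets functions topology normedtype derive realfun interval_inference.
From mathcomp Require Import ring lra.
Import Order.TTheory GRing.Theory Num.Theory.
Import numFieldNormedType.Exports.
Local Open Scope ring_scope.

Section S.
Variable R : realType.

Lemma nincr0 (f df : R -> R) : (forall x, is_derive x (1:R) f (df x)) ->
  (forall x, 0 < x -> df x <= 0) -> forall y, 0 <= y -> f y <= f 0.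
Proof.
move=> hd hle y y0.
apply: (@ler0_derive1_nincry R f 0) => //.
- move=> x; rewrite in_itv /= andbT => x0. rewrite derive1E derive_val. exact: hle x0.
- by apply: derivable_within_continuous => x _; have [] := hd x.
Qed.

Variable p : R.
Definition D (l : R) := 1 - p + p * expR l.

Lemma dD x : is_derive x (1:R) D (p * expR x).
Proof. rewrite /D; apply: is_derive_eq; by rewrite add0r mul1r. Qed.

Lemma D_gt0 x : 0 <= p -> p <= 1 -> 0 < D x.
Proof.
move=> p0 p1; rewrite /D; have := expR_gt0 x => e0.
by have := mulr_ge0 p0 (ltW e0); nra.
Qed.

Definition h (l : R) := p * expR l / D l - p - l / 4.

Lemma dh x : 0 <= p -> p <= 1 -> is_derive x (1:R) h
   (p * expR x / D x - (p * expR x / D x)^+2 - 1/4).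
Proof.
move=> p0 p1.
have Dx := D_gt0 x p0 p1.
have dV := is_deriveV (lt0r_neq0 Dx) (dD x).
have dE : is_derive x (1:R) (fun l => p * expR l) (p * expR x).
  by apply: is_derive_eq.
rewrite /h; apply: is_derive_eq.
rewrite !scaler0 subr0 !/GRing.scale /=. field. by apply: lt0r_neq0. Qed.

Lemma D0 : D 0 = 1.
Proof. by rewrite /D expR0 mulr1 subrK. Qed.

Lemma h_le0 y : 0 <= p -> p <= 1 -> 0 <= y -> h y <= 0.
Proof.
move=> p0 p1 y0.
have -> : 0 = h 0 by rewrite /h D0 expR0 mulr1 divr1 subrr mul0r subr0.
apply: (@nincr0 h (fun x => p * expR x / D x - (p * expR x / D x)^+2 - 1/4) (fun x => dh x p0 p1)) => // x _ /=.
move: (p * expR x / D x) => q.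
rewrite -subr_ge0 (_ : _ - _ = (q - 1/2)^+2); first exact: sqr_ge0.
by field.
Qed.

Definition g (l : R) := - (l * p + l ^+ 2 / 8).
Definition G (l : R) := D l * expR (g l).

Lemma dG x : 0 <= p -> p <= 1 -> is_derive x (1:R) G (D x * expR (g x) * h x).
Proof.
move=> p0 p1.
have Dx := D_gt0 x p0 p1.
have dg : is_derive x (1:R) g (- (p + x / 4)).
  rewrite /g; apply: is_derive_eq.
  by rewrite !scaler0 !/GRing.scale /= ; field.
have dE := is_derive1_comp (is_derive_expR (g x)) dg.
have dD' := dD x.
rewrite /G; apply: is_derive_eq.
rewrite !/GRing.scale /= /h; field.
by apply: lt0r_neq0.
Qed.

Lemma hoeff_lemma l : 0 <= p -> p <= 1 -> 0 <= l ->
  1 - p + p * expR l <= expR (l * p + l ^+ 2 / 8).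
Proof.
move=> p0 p1 l0.
have : G l <= G 0.
  apply: (@nincr0 G (fun x => D x * expR (g x) * h x) (fun x => dG x p0 p1)) => // x x0.
  apply: mulr_ge0_le0; last exact: h_le0 (ltW x0).
  by rewrite mulr_ge0 // ltW // ?expR_gt0 // D_gt0.
rewrite /G D0 /g mul0r expr0n /= mul0r addr0 oppr0 expR0 mul1r expRN.
have e0 := expR_gt0 (l * p + l ^+ 2 / 8).
by rewrite ler_pdivrMr // mul1r.
Qed.

End S.

Section Comb.
Variables (R : realType) (n m k : nat) (mu : 'I_k -> {ffun 'I_m -> bool}) (c : 'I_n -> 'I_k).

Definition F (i : 'I_k) (s : 'I_m) (w : answers n m) : nat :=
  #|[set v | (c v == i) && (w (v, s) != mu i s)]|.

Lemma bad_flip (a : R) (w : answers n m) : (0 < k)%N ->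
  mindsets_nondegenerate mu -> bad_event a mu w ->
  exists i s, a <= k%:R * (F i s w)%:R.
Proof.
move=> k0 nd /existsP [tau /andP [tg /forallP ne]].
have : ~~ [forall x, forall y, forall z, [exists i,
   (tau x == mu i x) && (tau y == mu i y) && (tau z == mu i z)]].
  apply/negP => /forallP H.
  have [j tj] : exists j, tau = mu j.
    apply: nd => x y z.
    have /forallP/(_ y)/forallP/(_ z)/existsP [i /andP [/andP [/eqP e1 /eqP e2] /eqP e3]] := H x.
    by exists i.
  by have := ne j; rewrite tj eqxx.
move/forallPn => [x /forallPn [y /forallPn [z /existsPn H]]].
pose sel i := if tau x != mu i x then x else if tau y != mu i y then y else z.
have hsel : forall i, tau (sel i) != mu i (sel i).
  move=> i; have := H i; rewrite /sel.
  by case: ifP => // /negbFE ->; case: ifP => // /negbFE ->.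
move: tg => /forallP/(_ x)/forallP/(_ y)/forallP/(_ z) tg.
set S := _ :&: _ :&: _ in tg.
have hS : (#|S| <= \sum_i F i (sel i) w)%N.
  rewrite -sum1_card (partition_big c xpredT) //=.
  apply: leq_sum => i _.
  rewrite sum1_card /F; apply: subset_leq_card; apply/fintype.subsetP => v.
  rewrite unfold_in /= /S /side !inE => /andP [/andP [/andP [hx hy] hz] /eqP ci].
  rewrite ci eqxx /=.
  have : w (v, sel i) == tau (sel i).
    by rewrite /sel; case: ifP => _ //; case: ifP.
  by move/eqP => ->; exact: hsel.
case: (boolP [exists i, a <= k%:R * (F i (sel i) w)%:R]).
  by case/existsP => i hi; exists i, (sel i).
move/existsPn => hlt; exfalso.
have hlt' : forall i, k%:R * (F i (sel i) w)%:R < a.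
  by move=> i; have := hlt i; rewrite -ltNge.
have : \sum_(i < k) k%:R * (F i (sel i) w)%:R < \sum_(i < k) a.
  apply: ltr_sum => //.
  by apply/hasP; exists (Ordinal k0); rewrite ?mem_index_enum.
rewrite -mulr_sumr sumr_const card_ord -natr_sum.
have : (#|S|%:R : R) <= (\sum_i F i (sel i) w)%:R by rewrite ler_nat.
have kp : (0 : R) < k%:R by rewrite ltr0n.
move: tg; rewrite -mulr_natr => tg.
nra.
Qed.

Lemma F_sum i s w : (F i s w)%:R = \sum_(vs : 'I_n * 'I_m)
   (if (vs.2 == s) && (c vs.1 == i) && (w vs != mu i s) then 1 else 0) :> R.
Proof.
transitivity (\sum_(v : 'I_n) \sum_(s' : 'I_m)
   (if (s' == s) && (c v == i) && (w (v, s') != mu i s) then (1:R) else 0)); last first.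
  by rewrite pair_bigA; apply: eq_bigr => -[v s'] _.
rewrite /F -sum1_card natr_sum big_mkcond /=.
apply: eq_bigr => v _.
rewrite (bigD1 s) //= eqxx /= big1 ?addr0 => [|s' /negbTE -> //].
by rewrite inE; case: ifP.
Qed.

Lemma mgf (p l : R) i s :
  \sum_(w : answers n m) weight p mu c w * expR (l * (F i s w)%:R) =
  (1 - p + p * expR l) ^+ #|[set v | c v == i]|.
Proof.
under eq_bigr => w _ do rewrite F_sum mulr_sumr expR_sum /weight -big_split /=.
pose f := fun (vs : 'I_n * 'I_m) (b : bool) =>
  (if b == mu (c vs.1) vs.2 then 1 - p else p) *
  expR (l * (if (vs.2 == s) && (c vs.1 == i) && (b != mu i s) then 1 else 0)).
have := bigA_distr_bigA f.
rewrite /f /= => <-.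
transitivity (\prod_(vs : 'I_n * 'I_m)
   (if (vs.2 == s) && (c vs.1 == i) then 1 - p + p * expR l else 1)).
  apply: eq_bigr => -[v s'] _ /=; rewrite big_bool /=.
  case: (s' =P s) => [->|_]; case: (c v =P i) => [<-|_]; case: (mu (c v) _) => /=;
    rewrite ?andbF ?andbT /= ?mulr0 ?mulr1 ?expR0 ?mulr1 ?subrK //; try by rewrite addrC subrK. all: try by rewrite addrC.
transitivity (\prod_(v : 'I_n) \prod_(s' : 'I_m)
   (if (s' == s) && (c v == i) then 1 - p + p * expR l else 1)).
  by rewrite pair_bigA; apply: eq_bigr => -[v s'] _.
rewrite -prodr_const.
rewrite [RHS]big_mkcond; apply: eq_bigr => v _.
rewrite (bigD1 s) //= eqxx /= big1 ?mulr1 => [|s' /negbTE -> //].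
by rewrite inE.
Qed.
End Comb.

Lemma term_le (R : realType) (I : finType) (G : I -> R) j :
  (forall i, 0 <= G i) -> G j <= \sum_i G i.
Proof. by move=> h; rewrite (bigD1 j) //= lerDl; apply: sumr_ge0 => i _; exact: h. Qed.

Theorem lemma2 (R : realType) (n m k : nat) (p alpha : R)
    (mu : 'I_k -> {ffun 'I_m -> bool}) (c : 'I_n -> 'I_k) :
  (0 < n)%N -> (0 < m)%N -> (0 < k)%N -> (k %| n)%N ->
  0 < p -> p < 1 / 2 ->
  mindsets_nondegenerate mu ->
  (forall i : 'I_k, #|[set v | c v == i]| = (n %/ k)%N) ->
  p < (alpha * n%:R) / n%:R ->
  prob_bad p (alpha * n%:R) mu c <=
    k%:R * m%:R * expR (- (2 * (alpha - p) ^+ 2 * n%:R / k%:R)).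
Proof.
move=> n0 m0 k0 kn p0 p12 nd hc hpa.
set N := (n %/ k)%N.
have nNk : n = (N * k)%N by rewrite divnK.
have nR : (n%:R : R) != 0 by rewrite pnatr_eq0 -lt0n.
have kR : (0 : R) < k%:R by rewrite ltr0n.
have nNkR : (n%:R : R) = N%:R * k%:R by rewrite {1}nNk natrM.
have pa : p < alpha by move: hpa; rewrite mulfK.
set l := 4 * (alpha - p).
have l0 : 0 <= l by rewrite /l; lra.
have p1 : p <= 1 by lra.
have wt0 : forall w : answers n m, 0 <= weight p mu c w.
  move=> w; apply: prodr_ge0 => vs _; case: ifP => _; lra.
set E := expR (- (2 * (alpha - p) ^+ 2 * N%:R)).
have key : forall i s, \sum_(w : answers n m | alpha * n%:R <= k%:R * (@F n m k mu c i s w)%:R)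
    weight p mu c w <= E.
  move=> i s.
  apply: (@le_trans _ _ (\sum_(w : answers n m)
     weight p mu c w * expR (l * (@F n m k mu c i s w)%:R) * expR (- (l * alpha * N%:R)))).
    rewrite big_mkcond /=; apply: ler_sum => w _.
    case: ifP => hw; last by rewrite mulr_ge0 ?expR_ge0 ?mulr_ge0 ?expR_ge0.
    rewrite -mulrA -expRD -{1}(mulr1 (weight _ _ _ _)); apply: ler_wpM2l => //.
    have : 0 <= l * (@F n m k mu c i s w)%:R + - (l * alpha * N%:R).
      move: hw; rewrite nNkR; move: (@F n m k mu c i s w)%:R => f hw.
      nra.
    by move=> h; apply: le_trans (expR_ge1Dx _); lra.
  rewrite -mulr_suml mgf hc -/N.
  apply: (@le_trans _ _ (expR (l * p + l ^+ 2 / 8) ^+ N * expR (- (l * alpha * N%:R)))).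
    apply: ler_wpM2r; first exact: expR_ge0.
    apply: lerXn2r; rewrite ?nnegrE ?expR_ge0 //; last exact: (@hoeff_lemma R p l (ltW p0) p1 l0).
    exact: ltW (@D_gt0 R p _ (ltW p0) p1).
  rewrite -expRM_natl -expRD /E.
  rewrite le_eqVlt; apply/orP; left; apply/eqP; congr expR; rewrite /l; field; by [].
have ge0 : forall w i s, 0 <= (if alpha * n%:R <= k%:R * (@F n m k mu c i s w)%:R
   then weight p mu c w else 0).
  by move=> w i s; case: ifP => _ //; exact: wt0.
rewrite /prob_bad.
apply: (@le_trans _ _ (\sum_(w : answers n m) \sum_(i < k) \sum_(s < m)
   (if alpha * n%:R <= k%:R * (@F n m k mu c i s w)%:R then weight p mu c w else 0))).
  rewrite [leRHS](bigID (bad_event (alpha * n%:R) mu)) -[leLHS]addr0.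
  apply: lerD; last by apply: sumr_ge0 => w _; apply: sumr_ge0 => i _; apply: sumr_ge0 => s _; exact: ge0.
  apply: ler_sum => w hw.
  have [i0 [s0 h0]] := @bad_flip R n m k mu c _ w k0 nd hw.
  have t1 := (@term_le R _ (fun i => \sum_(s < m) (if alpha * n%:R <= k%:R * (@F n m k mu c i s w)%:R
   then weight p mu c w else 0)) i0 (fun i => sumr_ge0 _ (fun s _ => ge0 w i s))).
  apply: le_trans _ t1.
  apply: le_trans _ (@term_le R _ (fun s => (if alpha * n%:R <= k%:R * (@F n m k mu c i0 s w)%:R
   then weight p mu c w else 0)) s0 _); last by move=> s; exact: ge0.
  by rewrite h0.
rewrite exchange_big.
apply: (@le_trans _ _ (\sum_(i < k) \sum_(s < m) E)).
  apply: ler_sum => i _; rewrite exchange_big; apply: ler_sum => s _.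
  by rewrite -big_mkcond; exact: key.
have -> : 2 * (alpha - p) ^+ 2 * n%:R / k%:R = 2 * (alpha - p) ^+ 2 * N%:R.
  by rewrite nNkR mulrA mulfK // lt0r_neq0.
rewrite !sumr_const !card_ord -[E *+ m]mulr_natl -mulr_natl mulrA.
rewrite /E; move: (expR _) => X; rewrite le_eqVlt; apply/orP; left; apply/eqP; rewrite -mulr_natl; ring.
Qed.
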